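(* Let $L=E[C_1,\dots,C_n]$ be a congruence normal lattice (notation in the context). Then: (1) $L$ is join-extremal if and only if every $C_i$ is a lower pseudo-interval and, for every $i$, $C_i$ intersects the spine of $E[C_1,\dots,C_{i-1}]$. (2) $L$ is meet-extremal if and only if every $C_i$ is an upper pseudo-interval and, for every $i$, $C_i$ intersects the spine of $E[C_1,\dots,C_{i-1}]$. (3) $L$ is extremal if and only if every $C_i$ is an interval and, for every $i$, $C_i$ intersects the spine of $E[C_1,\dots,C_{i-1}]$.
   Context: All lattices are finite. A subset $C$ of a poset is convex if $x,y\in C$ implies $[x,y]\subseteq C$. For a convex subset $C$ of a lattice $L$, let $I_L(C)=\{y\in L\mid \exists x\in C,\ y\le x\}$. The doubling $L[C]$ is the subposet of $L\times\{0<1\}$ (product order) on the set $\big(I_L(C)\times\{0\}\big)\sqcup\big(((L\setminus I_L(C))\cup C)\times\{1\}\big)$; it is a lattice. $E[\,]$ denotes the one-element lattice and $E[C_1,\dots,C_{i+1}]:=E[C_1,\dots,C_i][C_{i+1}]$, where each $C_{i+1}$ is a nonempty convex subset of $E[C_1,\dots,C_i]$; a lattice of this form is congruence normal. A lower (resp. upper) pseudo-interval is a union of intervals sharing the same minimum (resp. maximum) element. The length $\ell(P)$ of a poset is the maximum number of elements of a chain minus one; the spine of $P$ is the set of elements lying on some chain of length $\ell(P)$. A lattice $L$ is join-extremal if $\ell(L)$ equals the number of join-irreducible elements (elements covering exactly one element), meet-extremal if $\ell(L)$ equals the number of meet-irreducible elements (elements covered by exactly one element), and extremal if both hold. *)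

(* Defs.v *)
(* By definition L[C] is a subposet of L x {0<1} (product order), and
   E[] is the one-element lattice, so E[C_1,...,C_k] is (literally) a
   subposet of {0,1}^k with the componentwise order.  We represent its
   elements as bit sequences of length k (the i-th bit is the {0<1}
   coordinate added by the i-th doubling), and a finite poset /
   subset as a list of such bit sequences. *)
From mathcomp Require Import all_boot.
Set Implicit Arguments. Unset Strict Implicit. Unset Printing Implicit Defensive.

Definition elt := seq bool.
Definition pset := seq elt.

Definition ble (x y : elt) : bool := all2 implb x y.
Definition blt (x y : elt) : bool := ble x y && (x != y).

Definition downset (L C : pset) : pset :=
  [seq y <- L | has (fun x => ble y x) C].

Definition double (L C : pset) : pset :=
  undup ([seq rcons y false | y <- [seq y <- L | y \in downset L C]] ++
         [seq rcons y true  | y <- [seq y <- L | (y \notin downset L C) || (y \in C)]]).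

Definition E0 : pset := [:: [::]].

Definition build (Cs : seq pset) : pset := foldl double E0 Cs.

Definition convex (L C : pset) : Prop :=
  forall x y z, x \in C -> y \in C -> z \in L -> ble x z -> ble z y -> z \in C.

(* Cs = [C_1; ...; C_n] is a valid congruence-normal construction:
   each C_{i+1} is a nonempty convex subset of E[C_1,...,C_i]
   (0-indexed: nth i Cs is a subset of build (take i Cs)). *)
Definition valid_cn (Cs : seq pset) : Prop :=
  forall i, i < size Cs ->
    [/\ nth [::] Cs i != [::],
        {subset nth [::] Cs i <= build (take i Cs)}
      & convex (build (take i Cs)) (nth [::] Cs i)].

Definition interval (L : pset) (a b : elt) : pset :=
  [seq z <- L | ble a z && ble z b].

Definition is_interval (L C : pset) : Prop :=
  exists a b, [/\ a \in L, b \in L, ble a b & C =i interval L a b].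

Definition lower_pseudo_interval (L C : pset) : Prop :=
  exists (a : elt) (bs : seq elt),
    [/\ a \in L, bs != [::], (forall b, b \in bs -> b \in L /\ ble a b)
      & (forall z, z \in C <-> exists2 b, b \in bs & z \in interval L a b)].

Definition upper_pseudo_interval (L C : pset) : Prop :=
  exists (b : elt) (as_ : seq elt),
    [/\ b \in L, as_ != [::], (forall a, a \in as_ -> a \in L /\ ble a b)
      & (forall z, z \in C <-> exists2 a, a \in as_ & z \in interval L a b)].

Definition is_chain (L : pset) (s : seq elt) : Prop :=
  all (mem L) s /\ sorted blt s.

Definition poset_length (L : pset) (l : nat) : Prop :=
  (exists s, is_chain L s /\ size s = l.+1) /\
  (forall s, is_chain L s -> size s <= l.+1).

Definition in_spine (L : pset) (x : elt) : Prop :=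
  exists l s, [/\ poset_length L l, is_chain L s, size s = l.+1 & x \in s].

Definition meets_spine (L C : pset) : Prop :=
  exists2 x, x \in C & in_spine L x.

Definition covb (L : pset) (y x : elt) : bool :=
  blt y x && ~~ has (fun z => blt y z && blt z x) L.

Definition n_join_irr (L : pset) : nat :=
  count (fun x => size [seq y <- undup L | covb L y x] == 1) (undup L).

Definition n_meet_irr (L : pset) : nat :=
  count (fun x => size [seq y <- undup L | covb L x y] == 1) (undup L).

Definition join_extremal (L : pset) : Prop := poset_length L (n_join_irr L).
Definition meet_extremal (L : pset) : Prop := poset_length L (n_meet_irr L).
Definition extremal (L : pset) : Prop := join_extremal L /\ meet_extremal L.

(* Main.v *)
Require Import Defs.
From mathcomp Require Import all_boot.
From mathcomp Require Import zify.
From Stdlib Require Import Classical_Prop.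
Import Defs.
Set Implicit Arguments. Unset Strict Implicit. Unset Printing Implicit Defensive.


Lemma ble_refl x : ble x x.
Proof. by elim: x => //= b x ->; case: b. Qed.

Lemma ble_trans x y z : ble x y -> ble y z -> ble x z.
Proof.
elim: x y z => [|a x IH] [|b y] [|c z] //= /andP[h1 h2] /andP[h3 h4].
rewrite (IH _ _ h2 h4) andbT; by case: a b c h1 h3 => [] [] [].
Qed.

Lemma ble_anti x y : ble x y -> ble y x -> x = y.
Proof.
elim: x y => [|a x IH] [|b y] //= /andP[h1 h2] /andP[h3 h4].
rewrite (IH _ h2 h4); by case: a b h1 h3 => [] [].
Qed.

Lemma ble_rcons x y a b : ble (rcons x a) (rcons y b) = ble x y && (a ==> b).
Proof.
rewrite /ble; elim: x y => [|c x IH] [|d y] /=.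
- by rewrite andbT.
- by case: y => // *; rewrite andbF.
- by case: x {IH} => // *; rewrite andbF.
- by rewrite IH andbA.
Qed.

Definition wt (x : elt) := count id x.

Lemma ble_wt x y : ble x y -> wt x <= wt y.
Proof.
rewrite /wt; elim: x y => [|a x IH] [|b y] //= /andP[h1 h2].
have := IH _ h2; case: a b h1 => [] [] //= _; lia.
Qed.

Lemma blt_wt x y : blt x y -> wt x < wt y.
Proof.
rewrite /blt /wt; elim: x y => [|a x IH] [|b y] //= /andP[/andP[h1 h2] hne].
have hle := ble_wt h2; rewrite /wt in hle.
case: a b h1 hne => [] [] //= _ hne; try lia.
- have : x != y by apply: contraNneq hne => ->.
  move=> h; have := IH y; rewrite h2 h /= => /(_ isT); lia.
- have : x != y by apply: contraNneq hne => ->.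
  move=> h; have := IH y; rewrite h2 h /= => /(_ isT); lia.
Qed.

Lemma blt_irr x : blt x x = false.
Proof. by rewrite /blt eqxx andbF. Qed.

Lemma blt_ble x y : blt x y -> ble x y.
Proof. by case/andP. Qed.

Lemma blt_trans x y z : blt x y -> blt y z -> blt x z.
Proof.
move=> h1 h2; have := blt_wt h1; have := blt_wt h2.
move: h1 h2 => /andP[a _] /andP[b _].
rewrite /blt (ble_trans a b) /=; move=> *; apply/eqP => e; subst; lia.
Qed.

Lemma blt_ble_trans x y z : blt x y -> ble y z -> blt x z.
Proof.
move=> h1 h2; have := blt_wt h1; have := ble_wt h2.
move: h1 => /andP[a _].
rewrite /blt (ble_trans a h2) /=; move=> *; apply/eqP => e; subst; lia.
Qed.

Lemma ble_blt_trans x y z : ble x y -> blt y z -> blt x z.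
Proof.
move=> h1 h2; have := ble_wt h1; have := blt_wt h2.
move: h2 => /andP[a _].
rewrite /blt (ble_trans h1 a) /=; move=> *; apply/eqP => e; subst; lia.
Qed.

Lemma blt_neq x y : blt x y -> x != y.
Proof. by case/andP. Qed.

Lemma blt_asym x y : blt x y -> ble y x = false.
Proof.
move=> h; apply/negP => h2; have := blt_wt h; have := ble_wt h2; lia.
Qed.

Lemma bltE x y : blt x y = ble x y && (x != y).
Proof. by []. Qed.

Definition inI (C : pset) (y : elt) := has (ble y) C.
Definition inU (C : pset) (y : elt) := ~~ inI C y || (y \in C).
Definition r0 (y : elt) := rcons y false.
Definition r1 (y : elt) := rcons y true.

Lemma mem_map_rcons (s : pset) y b b' :
  (rcons y b \in map (rcons^~ b') s) = (b == b') && (y \in s).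
Proof.
apply/mapP/andP => [[z zs /rcons_inj [-> ->]]|[/eqP -> ys]]; last by exists y.
by rewrite eqxx.
Qed.

Lemma double_eq (L C : pset) : uniq L ->
  double L C = map r0 [seq y <- L | inI C y] ++ map r1 [seq y <- L | inU C y].
Proof.
move=> uL; rewrite /double.
have e1 : [seq y <- L | y \in downset L C] = [seq y <- L | inI C y].
  by apply: eq_in_filter => y yL; rewrite mem_filter yL andbT.
have e2 : [seq y <- L | (y \notin downset L C) || (y \in C)] = [seq y <- L | inU C y].
  by apply: eq_in_filter => y yL; rewrite mem_filter yL andbT.
rewrite e1 e2 undup_id // cat_uniq !(map_inj_uniq (@rcons_injl _ _)) ?filter_uniq //=.
rewrite andbT; apply/hasP => -[x /mapP [y _ ->]].
by rewrite /r0 mem_map_rcons.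
Qed.

Lemma uniq_double (L C : pset) : uniq (double L C).
Proof. exact: undup_uniq. Qed.

Lemma mem_double (L C : pset) y b : uniq L ->
  (rcons y b \in double L C) = (y \in L) && (if b then inU C y else inI C y).
Proof.
move=> uL; rewrite double_eq // mem_cat /r0 /r1 !mem_map_rcons !mem_filter.
by case: b => /=; rewrite ?andbF ?orbF // andbC.
Qed.

Lemma double_inv (L C : pset) x : uniq L -> x \in double L C ->
  exists y b, x = rcons y b.
Proof.
move=> uL; rewrite double_eq // mem_cat => /orP [] /mapP [y _ ->]; by do 2 eexists.
Qed.

Lemma count_double (L C : pset) (p : pred elt) : uniq L ->
  count p (double L C) =
  count (fun y => inI C y && p (r0 y)) L + count (fun y => inU C y && p (r1 y)) L.
Proof.
move=> uL; rewrite double_eq // count_cat !count_map !count_filter.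
by congr (_ + _); apply: eq_count => y /=; rewrite andbC.
Qed.

Lemma has_double (L C : pset) (p : pred elt) : uniq L ->
  has p (double L C) =
  has (fun y => inI C y && p (r0 y)) L || has (fun y => inU C y && p (r1 y)) L.
Proof.
move=> uL; rewrite !has_count count_double //; lia.
Qed.

Lemma ble_r0r0 y z : ble (r0 y) (r0 z) = ble y z.
Proof. by rewrite /r0 ble_rcons andbT. Qed.
Lemma ble_r1r1 y z : ble (r1 y) (r1 z) = ble y z.
Proof. by rewrite /r1 ble_rcons andbT. Qed.
Lemma ble_r0r1 y z : ble (r0 y) (r1 z) = ble y z.
Proof. by rewrite /r0 /r1 ble_rcons andbT. Qed.
Lemma ble_r1r0 y z : ble (r1 y) (r0 z) = false.
Proof. by rewrite /r0 /r1 ble_rcons andbF. Qed.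
Lemma blt_r0r0 y z : blt (r0 y) (r0 z) = blt y z.
Proof. by rewrite !bltE ble_r0r0 /r0 (inj_eq (@rcons_injl _ _)). Qed.
Lemma blt_r1r1 y z : blt (r1 y) (r1 z) = blt y z.
Proof. by rewrite !bltE ble_r1r1 /r1 (inj_eq (@rcons_injl _ _)). Qed.
Lemma blt_r0r1 y z : blt (r0 y) (r1 z) = ble y z.
Proof.
rewrite bltE ble_r0r1; case: (ble y z) => //=; apply/eqP => /rcons_inj [].
by [].
Qed.
Lemma blt_r1r0 y z : blt (r1 y) (r0 z) = false.
Proof. by rewrite bltE ble_r1r0. Qed.
Lemma r0r1_neq y z : (r0 y == r1 z) = false.
Proof. by apply/eqP => /rcons_inj []. Qed.
Lemma r1r0_neq y z : (r1 y == r0 z) = false.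
Proof. by apply/eqP => /rcons_inj []. Qed.
Lemma r0_eq y z : (r0 y == r0 z) = (y == z).
Proof. exact: (inj_eq (@rcons_injl _ _)). Qed.
Lemma r1_eq y z : (r1 y == r1 z) = (y == z).
Proof. exact: (inj_eq (@rcons_injl _ _)). Qed.

Lemma covb_double (L C : pset) a x : uniq L -> covb (double L C) a x =
  [&& blt a x, ~~ has (fun w => inI C w && (blt a (r0 w) && blt (r0 w) x)) L
             & ~~ has (fun w => inU C w && (blt a (r1 w) && blt (r1 w) x)) L].
Proof. by move=> uL; rewrite /covb has_double // negb_or. Qed.

Lemma inI_down (C : pset) y z : inI C z -> ble y z -> inI C y.
Proof. by move=> /hasP [c cC hc] h; apply/hasP; exists c => //; apply: ble_trans h hc. Qed.

Lemma inI_C (C : pset) y : y \in C -> inI C y.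
Proof. by move=> yC; apply/hasP; exists y => //; apply: ble_refl. Qed.

Lemma conv_up (L C : pset) y w : convex L C -> y \in C -> w \in L -> ble y w -> inI C w -> w \in C.
Proof. by move=> cv yC wL h /hasP [c cC hc]; apply: (cv y c w). Qed.

Lemma inU_C (C : pset) y : y \in C -> inU C y.
Proof. by move=> yC; rewrite /inU yC orbT. Qed.

Lemma inU_IC (C : pset) y : inI C y -> inU C y = (y \in C).
Proof. by rewrite /inU => ->. Qed.

Lemma notI_U (C : pset) y : ~~ inI C y -> inU C y.
Proof. by rewrite /inU => ->. Qed.

Lemma J1 (L C : pset) y z : uniq L -> inI C y ->
  covb (double L C) (r0 z) (r0 y) = covb L z y.
Proof.
move=> uL Iy; rewrite covb_double // /covb blt_r0r0.
have -> : has (fun w => inU C w && (blt (r0 z) (r1 w) && blt (r1 w) (r0 y))) L = false.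
  by apply/hasP => -[w _]; rewrite blt_r1r0 !andbF.
rewrite andbT; congr (_ && ~~ _); apply: eq_in_has => w _ /=.
rewrite !blt_r0r0; case h: (blt w y); rewrite ?andbF // andbT.
by rewrite (inI_down Iy (blt_ble h)).
Qed.

Lemma J2 (L C : pset) y z : uniq L -> covb (double L C) (r1 z) (r0 y) = false.
Proof. by move=> uL; rewrite covb_double // blt_r1r0. Qed.

Lemma J3 (L C : pset) y z : uniq L -> {subset C <= L} -> ~~ inI C y -> inI C z -> z \in L ->
  covb (double L C) (r0 z) (r1 y) = covb L z y && (z \notin C).
Proof.
move=> uL sub nIy Iz zL; rewrite covb_double // blt_r0r1 /covb.
apply/idP/idP.
- case/and3P => hzy /hasPn h1 /hasPn h2.
  have nzy : z != y by apply: contraNneq nIy => <-.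
  have hb : blt z y by rewrite /blt hzy nzy.
  rewrite hb /=; apply/andP; split.
  + apply/hasPn => w wL; apply/negP => /andP [hzw hwy].
    case Iw: (inI C w).
    * by move: (h1 w wL); rewrite Iw blt_r0r0 hzw blt_r0r1 (blt_ble hwy).
    * by move: (h2 w wL); rewrite notI_U ?Iw // blt_r0r1 (blt_ble hzw) blt_r1r1 hwy.
  + apply/negP => zC; move: (h2 z zL); rewrite inU_C // blt_r0r1 ble_refl blt_r1r1.
    by rewrite hb.
- case/andP => /andP [hzy /hasPn hb] nzC; rewrite (blt_ble hzy) /=.
  apply/andP; split; apply/hasPn => w wL; apply/negP.
  + rewrite blt_r0r0 blt_r0r1 => /and3P [Iw hzw hwy].
    have nwy : w != y by apply: contraNneq nIy => <-.
    by move: (hb w wL); rewrite hzw /blt hwy nwy.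
  + rewrite blt_r0r1 blt_r1r1 => /and3P [Uw hzw hwy].
    case: (eqVneq w z) => [ewz|nwz].
    * by subst w; move: Uw; rewrite inU_IC // (negbTE nzC).
    * by move: (hb w wL); rewrite hwy /blt hzw eq_sym nwz.
Qed.

Lemma J4 (L C : pset) y z : uniq L -> convex L C -> inU C z ->
  covb (double L C) (r1 z) (r1 y) = covb L z y.
Proof.
move=> uL cv Uz; rewrite covb_double // blt_r1r1 /covb.
have -> : has (fun w => inI C w && (blt (r1 z) (r0 w) && blt (r0 w) (r1 y))) L = false.
  by apply/hasP => -[w _]; rewrite blt_r1r0 /= andbF.
rewrite /= ?andbT; congr (_ && ~~ _); apply/idP/idP.
- by case/hasP => w wL; rewrite !blt_r1r1 => /andP [_ h]; apply/hasP; exists w.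
- case/hasP => w wL /andP [hzw hwy]; apply/hasP; exists w => //.
  rewrite !blt_r1r1 hzw hwy !andbT.
  case Iw: (inI C w); last by rewrite notI_U ?Iw.
  have Iz : inI C z by apply: inI_down Iw (blt_ble hzw).
  rewrite inU_IC // in Uz.
  by rewrite inU_IC // (conv_up cv Uz wL (blt_ble hzw) Iw).
Qed.

Lemma J5 (L C : pset) y z : uniq L -> {subset C <= L} -> y \in C ->
  covb (double L C) (r0 z) (r1 y) = (z == y).
Proof.
move=> uL sub yC; rewrite covb_double // blt_r0r1.
apply/idP/idP.
- case/and3P => hzy /hasPn h1 _; apply/negPn/negP => nzy.
  have hb : blt z y by rewrite /blt hzy nzy.
  by move: (h1 y (sub y yC)); rewrite inI_C // blt_r0r0 blt_r0r1 ble_refl hb.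
- move/eqP => ->; rewrite ble_refl /=; apply/andP; split; apply/hasPn => w _; apply/negP.
  + by rewrite blt_r0r0 blt_r0r1 => /and3P [_ h1 h2]; rewrite (blt_asym h1) in h2.
  + by rewrite blt_r0r1 blt_r1r1 => /and3P [_ h1 h2]; rewrite (blt_asym h2) in h1.
Qed.

Lemma M1 (L C : pset) y z : uniq L -> inI C z ->
  covb (double L C) (r0 y) (r0 z) = covb L y z.
Proof.
move=> uL Iz; rewrite covb_double // /covb blt_r0r0.
have -> : has (fun w => inU C w && (blt (r0 y) (r1 w) && blt (r1 w) (r0 z))) L = false.
  by apply/hasP => -[w _]; rewrite blt_r1r0 !andbF.
rewrite /= ?andbT; congr (_ && ~~ _); apply: eq_in_has => w _ /=.
rewrite !blt_r0r0; case h: (blt w z); rewrite ?andbF // andbT.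
by rewrite (inI_down Iz (blt_ble h)).
Qed.

Lemma M2 (L C : pset) y z : uniq L -> covb (double L C) (r1 y) (r0 z) = false.
Proof. by move=> uL; rewrite covb_double // blt_r1r0. Qed.

Lemma M3 (L C : pset) y z : uniq L -> convex L C -> inU C y ->
  covb (double L C) (r1 y) (r1 z) = covb L y z.
Proof.
move=> uL cv Uy; rewrite covb_double // blt_r1r1 /covb.
have -> : has (fun w => inI C w && (blt (r1 y) (r0 w) && blt (r0 w) (r1 z))) L = false.
  by apply/hasP => -[w _]; rewrite blt_r1r0 /= andbF.
rewrite /= ?andbT; congr (_ && ~~ _); apply/idP/idP.
- by case/hasP => w wL; rewrite !blt_r1r1 => /andP [_ h]; apply/hasP; exists w.
- case/hasP => w wL /andP [hyw hwz]; apply/hasP; exists w => //.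
  rewrite !blt_r1r1 hyw hwz !andbT.
  case Iw: (inI C w); last by rewrite notI_U ?Iw.
  have Iy : inI C y by apply: inI_down Iw (blt_ble hyw).
  rewrite inU_IC // in Uy.
  by rewrite inU_IC // (conv_up cv Uy wL (blt_ble hyw) Iw).
Qed.

Lemma M4 (L C : pset) y z : uniq L -> inI C y -> y \notin C -> inU C z -> z \in L ->
  covb (double L C) (r0 y) (r1 z) = covb L y z && ~~ inI C z.
Proof.
move=> uL Iy nyC Uz zL; rewrite covb_double // blt_r0r1 /covb.
have nUy : inU C y = false by rewrite inU_IC // (negbTE nyC).
apply/idP/idP.
- case/and3P => hyz /hasPn h1 /hasPn h2.
  have nyz : y != z by apply: contraTneq Uz => <-; rewrite nUy.
  have hb : blt y z by rewrite /blt hyz nyz.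
  rewrite hb /=; apply/andP; split.
  + apply/hasPn => w wL; apply/negP => /andP [hyw hwz].
    case Iw: (inI C w).
    * by move: (h1 w wL); rewrite Iw blt_r0r0 hyw blt_r0r1 (blt_ble hwz).
    * by move: (h2 w wL); rewrite notI_U ?Iw // blt_r0r1 (blt_ble hyw) blt_r1r1 hwz.
  + apply/negP => Iz; move: (h1 z zL); rewrite Iz blt_r0r0 blt_r0r1 ble_refl.
    by rewrite hb.
- case/andP => /andP [hyz /hasPn hb] nIz; rewrite (blt_ble hyz) /=.
  apply/andP; split; apply/hasPn => w wL; apply/negP.
  + rewrite blt_r0r0 blt_r0r1 => /and3P [Iw hyw hwz].
    case: (eqVneq w z) => [ewz|nwz].
    * by subst w; rewrite Iw in nIz.
    * by move: (hb w wL); rewrite hyw /blt hwz nwz.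
  + rewrite blt_r0r1 blt_r1r1 => /and3P [Uw hyw hwz].
    case: (eqVneq w y) => [ewy|nwy].
    * by subst w; rewrite nUy in Uw.
    * by move: (hb w wL); rewrite hwz /blt hyw eq_sym nwy.
Qed.

Lemma M5 (L C : pset) y z : uniq L -> {subset C <= L} -> y \in C ->
  covb (double L C) (r0 y) (r1 z) = (z == y).
Proof.
move=> uL sub yC; rewrite covb_double // blt_r0r1.
apply/idP/idP.
- case/and3P => hyz _ /hasPn h2; apply/negPn/negP => nzy.
  have hb : blt y z by rewrite /blt hyz eq_sym nzy.
  by move: (h2 y (sub y yC)); rewrite inU_C // blt_r0r1 ble_refl blt_r1r1 hb.
- move/eqP => ->; rewrite ble_refl /=; apply/andP; split; apply/hasPn => w _; apply/negP.
  + by rewrite blt_r0r0 blt_r0r1 => /and3P [_ h1 h2]; rewrite (blt_asym h1) in h2.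
  + by rewrite blt_r0r1 blt_r1r1 => /and3P [_ h1 h2]; rewrite (blt_asym h2) in h1.
Qed.

Definition ncov (M : pset) x := count (fun z => covb M z x) M.
Definition ncovU (M : pset) x := count (fun z => covb M x z) M.

Lemma njiE (M : pset) : uniq M -> n_join_irr M = count (fun x => ncov M x == 1) M.
Proof.
move=> uM; rewrite /n_join_irr undup_id //; apply: eq_count => x.
by rewrite size_filter.
Qed.

Lemma nmiE (M : pset) : uniq M -> n_meet_irr M = count (fun x => ncovU M x == 1) M.
Proof.
move=> uM; rewrite /n_meet_irr undup_id //; apply: eq_count => x.
by rewrite size_filter.
Qed.

Lemma count_sum4 (s : pset) (a b c d : pred elt) :
  (forall z, z \in s -> a z + b z = c z + d z) ->
  count a s + count b s = count c s + count d s.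
Proof.
elim: s => //= x s IH h.
have := h x (mem_head _ _); have := IH (fun z zs => h z (@mem_behead _ (x :: s) z zs)).
lia.
Qed.

Lemma count0 (s : pset) (a : pred elt) : (forall z, a z = false) -> count a s = 0.
Proof. by move=> h; rewrite (eq_count (a2 := pred0)) ?count_pred0. Qed.

Lemma count_one (L : pset) (a : pred elt) y : uniq L -> y \in L ->
  (forall z, a z = (z == y)) -> count a L = 1.
Proof.
move=> uL yL h; rewrite (eq_count (a2 := pred1 y)) //.
by have := count_uniq_mem y uL; rewrite yL.
Qed.

Lemma ncov_r0 (L C : pset) y : uniq L -> inI C y ->
  ncov (double L C) (r0 y) = ncov L y.
Proof.
move=> uL Iy; rewrite /ncov count_double //.
rewrite (count0 _ (a := fun z => inU C z && covb (double L C) (r1 z) (r0 y))); last first.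
  by move=> z; rewrite J2 // andbF.
rewrite addn0; apply: eq_count => z /=; rewrite J1 //.
case h: (covb L z y); rewrite ?andbF // andbT.
by apply: inI_down Iy (blt_ble (proj1 (andP h))).
Qed.

Lemma ncov_r1n (L C : pset) y : uniq L -> {subset C <= L} -> convex L C -> ~~ inI C y ->
  ncov (double L C) (r1 y) = ncov L y.
Proof.
move=> uL sub cv nIy; rewrite /ncov count_double //.
transitivity (count (fun z => covb L z y) L + count pred0 L); last by rewrite count_pred0 addn0.
apply: count_sum4 => z zL /=.
case Iz: (inI C z) => /=.
- rewrite J3 // (inU_IC Iz).
  case zC: (z \in C) => /=; rewrite ?andbT ?andbF ?J4 ?inU_C //; lia.
- rewrite J4 ?notI_U ?Iz //; lia.
Qed.

Lemma ncov_r1C (L C : pset) y : uniq L -> {subset C <= L} -> convex L C -> y \in C ->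
  ncov (double L C) (r1 y) = 1 + count (fun z => (z \in C) && covb L z y) L.
Proof.
move=> uL sub cv yC; rewrite /ncov count_double //.
rewrite (count_one (y := y)) //; last first.
  by move=> z; rewrite J5 //; case: eqP => [->|]; rewrite ?andbF ?andbT ?inI_C.
  by apply: sub.
congr (_ + _); apply: eq_count => z /=.
case h: (covb L z y); last by case Uz: (inU C z); rewrite /= ?J4 ?h ?andbF.
case Uz: (inU C z); rewrite /= ?J4 // ?h ?andbT.
- have Iz : inI C z by apply: inI_down (inI_C yC) (blt_ble (proj1 (andP h))).
  by rewrite -(inU_IC Iz).
- have Iz : inI C z by apply: inI_down (inI_C yC) (blt_ble (proj1 (andP h))).
  by rewrite -(inU_IC Iz) Uz.
Qed.

Lemma nji_double (L C : pset) : uniq L -> {subset C <= L} -> convex L C ->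
  n_join_irr (double L C) = n_join_irr L +
    count (fun y => (y \in C) && (count (fun z => (z \in C) && covb L z y) L == 0)) L.
Proof.
move=> uL sub cv; rewrite njiE ?uniq_double // njiE // count_double //.
apply: count_sum4 => y yL /=.
case Iy: (inI C y) => /=.
- rewrite ncov_r0 // (inU_IC Iy).
  case yC: (y \in C) => /=; last by lia.
  rewrite ncov_r1C //.
- have nyC : y \in C = false by apply: contraFF Iy; apply: inI_C.
  rewrite nyC notI_U ?Iy //= ncov_r1n ?Iy //; lia.
Qed.

Lemma inU_up (L C : pset) y z : convex L C -> inU C y -> ble y z -> z \in L -> inU C z.
Proof.
move=> cv Uy hyz zL.
case Iz: (inI C z); last by rewrite notI_U ?Iz.
have Iy : inI C y := inI_down Iz hyz.
rewrite inU_IC // in Uy; by rewrite inU_IC // (conv_up cv Uy zL hyz Iz).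
Qed.

Lemma ncovU_r1 (L C : pset) y : uniq L -> convex L C -> inU C y ->
  ncovU (double L C) (r1 y) = ncovU L y.
Proof.
move=> uL cv Uy; rewrite /ncovU count_double //.
rewrite (count0 _ (a := fun z => inI C z && covb (double L C) (r1 y) (r0 z))); last first.
  by move=> z; rewrite M2 // andbF.
rewrite add0n; apply: eq_in_count => z zL /=; rewrite M3 //.
case h: (covb L y z); rewrite ?andbF // andbT.
by apply: inU_up cv Uy (blt_ble (proj1 (andP h))) zL.
Qed.

Lemma ncovU_r0n (L C : pset) y : uniq L -> {subset C <= L} -> convex L C ->
  inI C y -> y \notin C -> ncovU (double L C) (r0 y) = ncovU L y.
Proof.
move=> uL sub cv Iy nyC; rewrite /ncovU count_double //.
transitivity (count (fun z => covb L y z) L + count pred0 L); last by rewrite count_pred0 addn0.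
apply: count_sum4 => z zL /=.
case Iz: (inI C z) => /=.
- rewrite M1 // (inU_IC Iz).
  case zC: (z \in C) => /=; rewrite ?M4 ?inU_C ?Iz ?andbF //; lia.
- rewrite M4 ?notI_U ?Iz // andbT; lia.
Qed.

Lemma ncovU_r0C (L C : pset) y : uniq L -> {subset C <= L} -> convex L C -> y \in C ->
  ncovU (double L C) (r0 y) = count (fun z => (z \in C) && covb L y z) L + 1.
Proof.
move=> uL sub cv yC; rewrite /ncovU count_double //.
rewrite [X in _ + X](count_one (y := y)) //; last first.
  by move=> z; rewrite M5 //; case: eqP => [->|]; rewrite ?andbF ?andbT ?inU_C.
  by apply: sub.
congr (_ + _); apply: eq_in_count => z zL /=.
case Iz: (inI C z) => /=.
- rewrite M1 //; case h: (covb L y z); rewrite ?andbF ?andbT //.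
  by rewrite (conv_up cv yC zL (blt_ble (proj1 (andP h))) Iz).
- by have -> : (z \in C) = false by apply: contraFF Iz; apply: inI_C.
Qed.

Lemma nmi_double (L C : pset) : uniq L -> {subset C <= L} -> convex L C ->
  n_meet_irr (double L C) = n_meet_irr L +
    count (fun y => (y \in C) && (count (fun z => (z \in C) && covb L y z) L == 0)) L.
Proof.
move=> uL sub cv; rewrite nmiE ?uniq_double // nmiE // count_double //.
apply: count_sum4 => y yL /=.
case Iy: (inI C y) => /=.
- rewrite (inU_IC Iy).
  case yC: (y \in C) => /=.
  + rewrite ncovU_r0C // ncovU_r1 ?inU_C //.
    case: (count _ L) => [|n] /=; lia.
  + rewrite ncovU_r0n ?yC //; lia.
- have nyC : y \in C = false by apply: contraFF Iy; apply: inI_C.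
  rewrite nyC notI_U ?Iy //= ncovU_r1 ?notI_U ?Iy //; lia.
Qed.

Lemma ex_max (f : elt -> nat) (P : pred elt) (s : pset) : has P s ->
  exists w, [/\ w \in s, P w & forall u, u \in s -> P u -> f u <= f w].
Proof.
elim: s => //= x s IH.
case Px: (P x) => /=.
- case Hs: (has P s).
  + case: (IH Hs) => w [ws Pw hw].
    case: (leqP (f x) (f w)) => hxw.
    * exists w; split => //; first by rewrite inE ws orbT.
      move=> u; rewrite inE => /orP [/eqP ->|us] //; exact: hw.
    * exists x; split => //; first by rewrite mem_head.
      move=> u; rewrite inE => /orP [/eqP ->|us Pu] //; have := hw u us Pu; lia.
  + move=> _; exists x; split => //; first by rewrite mem_head.
    move=> u; rewrite inE => /orP [/eqP ->|us Pu] //.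
    by move/hasPn: Hs => /(_ u us); rewrite Pu.
- move=> Hs; case: (IH Hs) => w [ws Pw hw]; exists w; split => //.
  + by rewrite inE ws orbT.
  + move=> u; rewrite inE => /orP [/eqP ->|us]; [by rewrite Px | exact: hw].
Qed.

Lemma ex_min (f : elt -> nat) (P : pred elt) (s : pset) : has P s ->
  exists w, [/\ w \in s, P w & forall u, u \in s -> P u -> f w <= f u].
Proof.
elim: s => //= x s IH.
case Px: (P x) => /=.
- case Hs: (has P s).
  + case: (IH Hs) => w [ws Pw hw].
    case: (leqP (f w) (f x)) => hxw.
    * exists w; split => //; first by rewrite inE ws orbT.
      move=> u; rewrite inE => /orP [/eqP ->|us] //; exact: hw.
    * exists x; split => //; first by rewrite mem_head.
      move=> u; rewrite inE => /orP [/eqP ->|us Pu] //; have := hw u us Pu; lia.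
  + move=> _; exists x; split => //; first by rewrite mem_head.
    move=> u; rewrite inE => /orP [/eqP ->|us Pu] //.
    by move/hasPn: Hs => /(_ u us); rewrite Pu.
- move=> Hs; case: (IH Hs) => w [ws Pw hw]; exists w; split => //.
  + by rewrite inE ws orbT.
  + move=> u; rewrite inE => /orP [/eqP ->|us]; [by rewrite Px | exact: hw].
Qed.

Lemma lower_cover (L : pset) z y : z \in L -> blt z y ->
  exists w, [/\ w \in L, ble z w & covb L w y].
Proof.
move=> zL hzy.
have hP : has (fun w => ble z w && blt w y) L by apply/hasP; exists z; rewrite // ble_refl.
case: (ex_max wt hP) => w [wL /andP [hzw hwy] hmax].
exists w; split => //; rewrite /covb hwy /=; apply/hasPn => u uL; apply/negP => /andP [h1 h2].
have := hmax u uL; rewrite (ble_trans hzw (blt_ble h1)) h2 => /(_ isT).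
have := blt_wt h1; lia.
Qed.

Lemma upper_cover (L : pset) z y : z \in L -> blt y z ->
  exists w, [/\ w \in L, ble w z & covb L y w].
Proof.
move=> zL hyz.
have hP : has (fun w => ble w z && blt y w) L by apply/hasP; exists z; rewrite // ble_refl.
case: (ex_min wt hP) => w [wL /andP [hwz hyw] hmin].
exists w; split => //; rewrite /covb hyw /=; apply/hasPn => u uL; apply/negP => /andP [h1 h2].
have := hmin u uL; rewrite (ble_trans (blt_ble h2) hwz) h1 => /(_ isT).
have := blt_wt h2; lia.
Qed.

Definition isMin (L C : pset) y := (y \in C) && ~~ has (fun z => (z \in C) && blt z y) L.
Definition isMax (L C : pset) y := (y \in C) && ~~ has (fun z => (z \in C) && blt y z) L.

Lemma mjE (L C : pset) : {subset C <= L} -> convex L C ->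
  count (fun y => (y \in C) && (count (fun z => (z \in C) && covb L z y) L == 0)) L =
  count (isMin L C) L.
Proof.
move=> sub cv; apply: eq_count => y; rewrite /isMin.
case yC: (y \in C) => //=; rewrite eqn0Ngt -has_count.
apply/hasPn/hasPn => h z zL.
- apply/negP => /andP [zC hzy].
  case: (lower_cover zL hzy) => w [wL hzw hwy].
  have wC : w \in C := cv z y w zC yC wL hzw (blt_ble (proj1 (andP hwy))).
  by move: (h w wL); rewrite wC hwy.
- apply/negP => /andP [zC /andP [hzy _]]; by move: (h z zL); rewrite zC hzy.
Qed.

Lemma mmE (L C : pset) : {subset C <= L} -> convex L C ->
  count (fun y => (y \in C) && (count (fun z => (z \in C) && covb L y z) L == 0)) L =
  count (isMax L C) L.
Proof.
move=> sub cv; apply: eq_count => y; rewrite /isMax.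
case yC: (y \in C) => //=; rewrite eqn0Ngt -has_count.
apply/hasPn/hasPn => h z zL.
- apply/negP => /andP [zC hyz].
  case: (upper_cover zL hyz) => w [wL hwz hyw].
  have wC : w \in C := cv y z w yC zC wL (blt_ble (proj1 (andP hyw))) hwz.
  by move: (h w wL); rewrite wC hyw.
- apply/negP => /andP [zC /andP [hyz _]]; by move: (h z zL); rewrite zC hyz.
Qed.

Lemma min_below (L C : pset) z : {subset C <= L} -> z \in C ->
  exists m, [/\ m \in L, isMin L C m & ble m z].
Proof.
move=> sub zC.
have hP : has (fun u => (u \in C) && ble u z) L by apply/hasP; exists z; rewrite ?sub // zC ble_refl.
case: (ex_min wt hP) => m [mL /andP [mC hmz] hmin].
exists m; split => //; rewrite /isMin mC /=; apply/hasPn => u uL; apply/negP => /andP [uC hum].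
have := hmin u uL; rewrite uC (ble_trans (blt_ble hum) hmz) => /(_ isT).
have := blt_wt hum; lia.
Qed.

Lemma max_above (L C : pset) z : {subset C <= L} -> z \in C ->
  exists m, [/\ m \in L, isMax L C m & ble z m].
Proof.
move=> sub zC.
have hP : has (fun u => (u \in C) && ble z u) L by apply/hasP; exists z; rewrite ?sub // zC ble_refl.
case: (ex_max wt hP) => m [mL /andP [mC hmz] hmax].
exists m; split => //; rewrite /isMax mC /=; apply/hasPn => u uL; apply/negP => /andP [uC hum].
have := hmax u uL; rewrite uC (ble_trans hmz (blt_ble hum)) => /(_ isT).
have := blt_wt hum; lia.
Qed.

Lemma count2 (L : pset) (p : pred elt) x y : uniq L -> x \in L -> y \in L -> x != y ->
  p x -> p y -> 2 <= count p L.
Proof.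
move=> uL xL yL nxy px py; rewrite -size_filter.
have -> : 2 = size [:: x; y] by [].
apply: uniq_leq_size; first by rewrite /= inE nxy.
by move=> u; rewrite !inE mem_filter => /orP [] /eqP ->; rewrite ?px ?py.
Qed.

Lemma count_le1 (L : pset) (p : pred elt) a : uniq L -> a \in L ->
  (forall u, p u -> u = a) -> count p L <= 1.
Proof.
move=> uL aL h; have <- : count (pred1 a) L = 1 by rewrite count_uniq_mem ?aL.
by apply: sub_count => u /h ->; rewrite /= eqxx.
Qed.

Lemma lpi_mj (L C : pset) : uniq L -> {subset C <= L} -> convex L C -> C != [::] ->
  1 <= count (isMin L C) L /\ (count (isMin L C) L = 1 <-> lower_pseudo_interval L C).
Proof.
move=> uL sub cv nC.
have [c cC] : exists c, c \in C by case: C nC {sub cv} => // c s _; exists c; rewrite mem_head.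
have [m0 [m0L m0min _]] := min_below sub cC.
have h1 : 1 <= count (isMin L C) L by rewrite -has_count; apply/hasP; exists m0.
split => //; split.
- move=> hc.
  have uniqm : forall m, m \in L -> isMin L C m -> m = m0.
    move=> m mL mm; apply/eqP/negPn/negP => ne.
    by have := count2 uL mL m0L ne mm m0min; rewrite hc.
  exists m0, C; split => //.
  + move=> b bC; split; first by apply: sub.
    by have [m [mL mm hmb]] := min_below sub bC; rewrite -(uniqm m mL mm).
  + move=> z; split.
    * move=> zC; exists z => //; rewrite mem_filter ble_refl andbT sub // andbT.
      by have [m [mL mm hmb]] := min_below sub zC; rewrite -(uniqm m mL mm).
    * case=> b bC; rewrite mem_filter => /andP [/andP [h2 h3] zL].
      by apply: (cv m0 b z) => //; case/andP: m0min.
- case=> a [bs [aL nbs hbs hC]].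
  have aC : a \in C.
    case: bs nbs hbs hC => // b bs _ hbs hC; apply/hC; exists b; first by rewrite mem_head.
    by rewrite mem_filter ble_refl aL (hbs b (mem_head _ _)).2.
  apply/eqP; rewrite eqn_leq h1 andbT; apply: (count_le1 uL aL) => u /andP [uC /hasPn hu].
    have hau : ble a u by have [b _] := (hC u).1 uC; rewrite mem_filter => /andP [/andP []].
  apply/eqP/negPn/negP => ne; move: (hu a aL); rewrite aC /blt hau eq_sym ne.
  by [].
Qed.

Lemma upi_mm (L C : pset) : uniq L -> {subset C <= L} -> convex L C -> C != [::] ->
  1 <= count (isMax L C) L /\ (count (isMax L C) L = 1 <-> upper_pseudo_interval L C).
Proof.
move=> uL sub cv nC.
have [c cC] : exists c, c \in C by case: C nC {sub cv} => // c s _; exists c; rewrite mem_head.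
have [m0 [m0L m0max _]] := max_above sub cC.
have h1 : 1 <= count (isMax L C) L by rewrite -has_count; apply/hasP; exists m0.
split => //; split.
- move=> hc.
  have uniqm : forall m, m \in L -> isMax L C m -> m = m0.
    move=> m mL mm; apply/eqP/negPn/negP => ne.
    by have := count2 uL mL m0L ne mm m0max; rewrite hc.
  exists m0, C; split => //.
  + move=> b bC; split; first by apply: sub.
    by have [m [mL mm hmb]] := max_above sub bC; rewrite -(uniqm m mL mm).
  + move=> z; split.
    * move=> zC; exists z => //; rewrite mem_filter ble_refl /= sub // andbT.
      by have [m [mL mm hmb]] := max_above sub zC; rewrite -(uniqm m mL mm).
    * case=> b bC; rewrite mem_filter => /andP [/andP [h2 h3] zL].
      by apply: (cv b m0 z) => //; case/andP: m0max.
- case=> b [as_ [bL nas has_ hC]].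
  have bC : b \in C.
    case: as_ nas has_ hC => // a as_ _ has_ hC; apply/hC; exists a; first by rewrite mem_head.
    by rewrite mem_filter ble_refl bL (has_ a (mem_head _ _)).2.
  apply/eqP; rewrite eqn_leq h1 andbT; apply: (count_le1 uL bL) => u /andP [uC /hasPn hu].
    have hub : ble u b by have [a _] := (hC u).1 uC; rewrite mem_filter => /andP [/andP []].
  apply/eqP/negPn/negP => ne; move: (hu b bL); rewrite bC /blt hub ne.
  by [].
Qed.

Lemma interval_iff (L C : pset) : {subset C <= L} -> convex L C ->
  is_interval L C <-> lower_pseudo_interval L C /\ upper_pseudo_interval L C.
Proof.
move=> sub cv; split.
- case=> a [b [aL bL hab hC]]; split.
  + exists a, [:: b]; split => //.
    * by move=> b'; rewrite inE => /eqP ->.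
    * move=> z; rewrite hC; split; first by exists b; rewrite ?mem_head.
      by case=> b'; rewrite inE => /eqP ->.
  + exists b, [:: a]; split => //.
    * by move=> a'; rewrite inE => /eqP ->.
    * move=> z; rewrite hC; split; first by exists a; rewrite ?mem_head.
      by case=> a'; rewrite inE => /eqP ->.
- case=> [[a [bs [aL nbs hbs hCa]]] [b [as_ [bL nas has_ hCb]]]].
  have aC : a \in C.
    case: bs nbs hbs hCa => // b0 bs _ hbs hCa; apply/hCa; exists b0; first by rewrite mem_head.
    by rewrite mem_filter ble_refl aL (hbs b0 (mem_head _ _)).2.
  have bC : b \in C.
    case: as_ nas has_ hCb => // a0 as_ _ has_ hCb; apply/hCb; exists a0; first by rewrite mem_head.
    by rewrite mem_filter ble_refl bL (has_ a0 (mem_head _ _)).2.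
  have la : forall z, z \in C -> ble a z.
    by move=> z /hCa [b' _]; rewrite mem_filter => /andP [/andP []].
  have lb : forall z, z \in C -> ble z b.
    by move=> z /hCb [a' _]; rewrite mem_filter => /andP [/andP []].
  exists a, b; split => //; first exact: la.
  move=> z; rewrite mem_filter; apply/idP/idP.
  + by move=> zC; rewrite la // lb // sub.
  + by case/andP => /andP [h1 h2] zL; apply: (cv a b z).
Qed.

Definition cchain (L s : pset) :=
  [/\ uniq s, {subset s <= L} & {in s &, forall x y, ble x y || ble y x}].

Lemma pairwise_in (r : rel elt) (s : pset) x y : pairwise r s -> x \in s -> y \in s ->
  x != y -> r x y || r y x.
Proof.
elim: s => //= z s IH /andP [/allP hz hs].
rewrite !inE => /orP [/eqP ->|xs] /orP [/eqP ->|ys]; rewrite ?eqxx //.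
- by move=> _; rewrite hz.
- by move=> _; rewrite hz ?orbT.
- by apply: IH.
Qed.

Lemma blt_transitive : transitive blt.
Proof. by move=> y x z h1 h2; apply: blt_trans h1 h2. Qed.

Lemma ble_transitive : transitive ble.
Proof. by move=> y x z h1 h2; apply: ble_trans h1 h2. Qed.

Lemma chain_cchain (L s : pset) : is_chain L s -> cchain L s.
Proof.
case=> /allP hL; rewrite (sorted_pairwise blt_transitive) => hp.
split => //.
- by apply: (pairwise_uniq _ hp) => x; rewrite blt_irr.
- move=> x y xs ys; case: (eqVneq x y) => [->|ne]; first by rewrite ble_refl.
  by case/orP: (pairwise_in hp xs ys ne) => /blt_ble ->; rewrite ?orbT.
Qed.

Lemma pairwise_ble_blt (t : pset) : pairwise ble t -> uniq t -> pairwise blt t.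
Proof.
elim: t => //= x t IH /andP [/allP hx ht] /andP [nxt ut].
rewrite IH // andbT; apply/allP => y yt; rewrite /blt hx //=.
by apply: contraNneq nxt => ->.
Qed.

Lemma cchain_sort (L s : pset) : cchain L s ->
  [/\ is_chain L (sort ble s), size (sort ble s) = size s & sort ble s =i s].
Proof.
case=> us sL tot; split; [|exact: size_sort|exact: mem_sort].
split; first by apply/allP => x; rewrite mem_sort => /sL.
have hs : sorted ble (sort ble s).
  by apply: (sort_sorted_in (P := mem s)) => //; apply/allP.
rewrite (sorted_pairwise blt_transitive); apply: pairwise_ble_blt.
- by rewrite -(sorted_pairwise ble_transitive).
- by rewrite sort_uniq.
Qed.

Lemma len_unique (L : pset) l l' : poset_length L l -> poset_length L l' -> l = l'.
Proof.
case=> [[s [cs ss]] hs] [[s' [cs' ss']] hs'].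
have := hs _ cs'; have := hs' _ cs; rewrite ss ss'; lia.
Qed.

Lemma len_bound (L s : pset) l : poset_length L l -> cchain L s -> size s <= l.+1.
Proof.
case=> _ hb cs; have [c1 <- _] := cchain_sort cs; exact: hb.
Qed.

Lemma len_spine (L s : pset) l x : poset_length L l -> cchain L s -> size s = l.+1 ->
  x \in s -> in_spine L x.
Proof.
move=> pl cs ss xs; have [c1 e1 e2] := cchain_sort cs.
by exists l, (sort ble s); split => //; [rewrite e1 | rewrite e2].
Qed.

Definition lift (C : pset) y := rcons y (~~ inI C y).

Lemma lift_cchain (L C s : pset) : uniq L -> cchain L s -> cchain (double L C) (map (lift C) s).
Proof.
move=> uL [us sL tot]; split.
- rewrite map_inj_uniq // => y z /rcons_inj; by case.
- move=> x /mapP [y ys ->]; rewrite /lift mem_double // sL //=.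
  by case Iy: (inI C y) => //=; rewrite notI_U ?Iy.
- move=> x1 x2 /mapP [y ys ->] /mapP [z zs ->]; rewrite /lift !ble_rcons.
  case/orP: (tot y z ys zs) => h; rewrite h /=.
  + case Iz: (inI C z); rewrite ?implybT ?orbT //=.
    by rewrite (inI_down Iz h).
  + case Iy: (inI C y); rewrite ?implybT ?orbT //=.
    by rewrite (inI_down Iy h) orbT.
Qed.

Lemma count_split (s : pset) (a b : pred elt) :
  count a s = count (fun y => a y && b y) s + count (fun y => a y && ~~ b y) s.
Proof. elim: s => //= x s ->; case: (a x) (b x) => [] [] /=; lia. Qed.

Lemma spine_cchain (L C s : pset) c : uniq L -> convex L C -> c \in C -> c \in s ->
  cchain L s -> cchain (double L C)
     (map r0 [seq y <- s | ble y c] ++ map r1 [seq y <- s | ble c y]) /\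
  size (map r0 [seq y <- s | ble y c] ++ map r1 [seq y <- s | ble c y]) = (size s).+1.
Proof.
move=> uL cv cC cs [us sL tot]; split; first split.
- rewrite cat_uniq !(map_inj_uniq (@rcons_injl _ _)) ?filter_uniq //=.
  rewrite andbT; apply/hasP => -[x /mapP [y _ ->]].
  by rewrite /r0 mem_map_rcons.
- move=> x; rewrite mem_cat => /orP [] /mapP [y]; rewrite mem_filter => /andP [h ys] ->.
  + by rewrite /r0 mem_double // sL //=; apply: inI_down (inI_C cC) h.
  + rewrite /r1 mem_double // sL //=.
    by apply: inU_up cv (inU_C cC) h (sL y ys).
- move=> x1 x2; rewrite !mem_cat => /orP [] /mapP [y]; rewrite mem_filter => /andP [h1 ys] ->
     /orP [] /mapP [z]; rewrite mem_filter => /andP [h2 zs] ->.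
  + by rewrite !ble_r0r0; apply: tot.
  + by rewrite ble_r0r1 (ble_trans h1 h2).
  + by rewrite ble_r0r1 (ble_trans h2 h1) orbT.
  + by rewrite !ble_r1r1; apply: tot.
- rewrite size_cat !size_map !size_filter.
  rewrite -(count_predUI (fun y => ble y c) (ble c)).
  have -> : count (predU (fun y => ble y c) (ble c)) s = size s.
    rewrite -count_predT; apply: eq_in_count => y ys /=.
    by rewrite orbC; apply: tot.
  have -> : count (predI (fun y => ble y c) (ble c)) s = 1.
    transitivity (count (pred1 c) s); last by rewrite (count_uniq_mem c us) cs.
    apply: eq_count => y /=.
    apply/andP/eqP => [[h1 h2]|->]; first by apply: ble_anti.
    by rewrite ble_refl.
  by rewrite addn1.
Qed.

Lemma size_sub_count (M s : pset) : uniq M -> uniq s -> {subset s <= M} ->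
  size s = count (mem s) M.
Proof.
move=> uM us sM; rewrite -size_filter; apply: perm_size; apply: uniq_perm => //.
  by rewrite filter_uniq.
by move=> x; rewrite mem_filter /=; case xs: (x \in s); rewrite // sM.
Qed.

Lemma proj_cchain (L C s : pset) : uniq L -> cchain (double L C) s ->
  exists t, cchain L t /\
   (size s = size t \/ (size s = (size t).+1 /\ exists2 c, c \in C & c \in t)).
Proof.
move=> uL [us sL tot].
set A := [seq y <- L | r0 y \in s].
set B := [seq y <- L | (r1 y \in s) && (r0 y \notin s)].
have mI : forall y, r0 y \in s -> inI C y /\ y \in L.
  by move=> y /sL; rewrite mem_double // => /andP [].
have mU : forall y, r1 y \in s -> inU C y /\ y \in L.
  by move=> y /sL; rewrite mem_double // => /andP [].
have ctA : cchain L (A ++ B).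
  split.
  - rewrite cat_uniq !filter_uniq //= andbT; apply/hasP => -[y].
    by rewrite !mem_filter => /andP [/andP [_ h] _] /andP [h' _]; rewrite h' in h.
  - by move=> y; rewrite mem_cat !mem_filter => /orP [] /andP [].
  - have hb : forall y, y \in A ++ B -> exists b, rcons y b \in s.
      move=> y; rewrite mem_cat !mem_filter => /orP [/andP [h _]|/andP [/andP [h _] _]].
      + by exists false.
      + by exists true.
    move=> y z /hb [b yb] /hb [b' zb]; case/orP: (tot _ _ yb zb); rewrite ble_rcons.
    + by case/andP => ->.
    + by case/andP => ->; rewrite orbT.
have ssize : size s = size A + size B +
    count (fun y => (r0 y \in s) && (r1 y \in s)) L.
  rewrite (size_sub_count (uniq_double L C) us sL) count_double //.
  rewrite !size_filter.
  have -> : count (fun y => inI C y && (r0 y \in s)) L = count (fun y => r0 y \in s) L.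
    by apply: eq_count => y; case h: (r0 y \in s); rewrite ?andbF ?andbT //; case: (mI y h).
  have -> : count (fun y => inU C y && (r1 y \in s)) L = count (fun y => r1 y \in s) L.
    by apply: eq_count => y; case h: (r1 y \in s); rewrite ?andbF ?andbT //; case: (mU y h).
  rewrite (count_split _ (fun y => r1 y \in s) (fun y => r0 y \notin s)).
  have -> : count (fun y => (r1 y \in s) && ~~ (r0 y \notin s)) L =
            count (fun y => (r0 y \in s) && (r1 y \in s)) L.
    by apply: eq_count => y; rewrite negbK andbC.
  lia.
exists (A ++ B); split => //.
case hD: (has (fun y => (r0 y \in s) && (r1 y \in s)) L).
- case/hasP: hD => c cL /andP [c0 c1].
  have D1 : count (fun y => (r0 y \in s) && (r1 y \in s)) L <= 1.
    apply: (count_le1 uL cL) => y /andP [y0 y1].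
    apply: ble_anti.
    + case/orP: (tot _ _ y0 c1); rewrite ?ble_r0r1 ?ble_r1r0 //.
    + case/orP: (tot _ _ c0 y1); rewrite ?ble_r0r1 ?ble_r1r0 //.
  have D0 : 0 < count (fun y => (r0 y \in s) && (r1 y \in s)) L.
    by rewrite -has_count; apply/hasP; exists c => //; rewrite c0 c1.
  right; split; first by rewrite ssize size_cat; lia.
  exists c.
  + by have [Ic _] := mI c c0; have [Uc _] := mU c c1; rewrite -(inU_IC Ic).
  + by rewrite mem_cat mem_filter c0 cL.
- left; rewrite ssize size_cat.
  by move/negbT: hD; rewrite has_count -eqn0Ngt => /eqP ->; rewrite addn0.
Qed.

Lemma len_meets (L C : pset) l : uniq L -> {subset C <= L} -> convex L C ->
  poset_length L l -> meets_spine L C -> poset_length (double L C) l.+1.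
Proof.
move=> uL sub cv pl [c cC [l0 [s [pl0 cs ss c_s]]]].
have el := len_unique pl0 pl; subst l0.
split.
- have [ct st] := spine_cchain uL cv cC c_s (chain_cchain cs).
  have [ch sz _] := cchain_sort ct.
  by eexists; split; [exact: ch| rewrite sz st ss].
- move=> s' /chain_cchain cs'.
  have [t [ct hs]] := proj_cchain uL cs'.
  have := len_bound pl ct; case: hs => [->|[-> _]]; lia.
Qed.

Lemma len_nomeets (L C : pset) l : uniq L -> {subset C <= L} -> convex L C ->
  poset_length L l -> ~ meets_spine L C -> poset_length (double L C) l.
Proof.
move=> uL sub cv pl nm; split.
- case: (pl) => [[s [cs ss]] _].
  have ct := lift_cchain C uL (chain_cchain cs).
  have [ch sz _] := cchain_sort ct.
  by eexists; split; [exact: ch| rewrite sz size_map ss].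
- move=> s' /chain_cchain cs'.
  have [t [ct hs]] := proj_cchain uL cs'.
  have hb := len_bound pl ct; case: hs => [->|[-> [c cC ct_]]] //.
  case: (eqVneq (size t) l.+1) => [e|ne].
  + by case: nm; exists c => //; apply: (len_spine pl ct e ct_).
  + rewrite ltn_neqAle in ne *; lia.
Qed.

Lemma len_E0 : poset_length E0 0.
Proof.
split; first by exists E0; split => //; split.
move=> s /chain_cchain [us sL _]; exact: (uniq_leq_size us sL).
Qed.

Lemma build_rcons (s : seq pset) x : build (rcons s x) = double (build s) x.
Proof. by rewrite /build foldl_rcons. Qed.

Lemma uniq_build (s : seq pset) : uniq (build s).
Proof.
elim/last_ind: s => [|s x _]; first by [].
by rewrite build_rcons uniq_double.
Qed.

Lemma forall_ltS (P : nat -> Prop) i :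
  (forall j, j < i.+1 -> P j) <-> (forall j, j < i -> P j) /\ P i.
Proof.
split.
- move=> h; split => [j ji|]; apply: h; [by rewrite ltnS ltnW | by []].
- case=> h1 h2 j; rewrite ltnS leq_eqVlt => /orP [/eqP ->|] //; exact: h1.
Qed.

Lemma main_ind (Cs : seq pset) : valid_cn Cs -> forall i, i <= size Cs ->
  exists l, [/\ poset_length (build (take i Cs)) l,
    l <= n_join_irr (build (take i Cs)), l <= n_meet_irr (build (take i Cs)),
    (l = n_join_irr (build (take i Cs)) <->
      (forall j, j < i -> lower_pseudo_interval (build (take j Cs)) (nth [::] Cs j)) /\
      (forall j, j < i -> meets_spine (build (take j Cs)) (nth [::] Cs j)))
  & (l = n_meet_irr (build (take i Cs)) <->
      (forall j, j < i -> upper_pseudo_interval (build (take j Cs)) (nth [::] Cs j)) /\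
      (forall j, j < i -> meets_spine (build (take j Cs)) (nth [::] Cs j)))].
Proof.
move=> HCs; elim=> [_|i IH hi].
- exists 0; rewrite take0; split => //; first exact: len_E0.
- have hi' : i < size Cs by [].
  have [l [pl lj lm ej em]] := IH (ltnW hi).
  have [nC sub cv] := HCs i hi'.
  set Li := build (take i Cs) in pl lj lm ej em sub cv.
  set Ci := nth [::] Cs i in nC sub cv.
  have eL : build (take i.+1 Cs) = double Li Ci by rewrite (take_nth [::] hi') build_rcons.
  rewrite eL.
  have uL : uniq Li := uniq_build _.
  have [mj1 mjE'] := lpi_mj uL sub cv nC.
  have [mm1 mmE'] := upi_mm uL sub cv nC.
  have fL : (forall j, j < i.+1 -> lower_pseudo_interval (build (take j Cs)) (nth [::] Cs j)) <->
    (forall j, j < i -> lower_pseudo_interval (build (take j Cs)) (nth [::] Cs j)) /\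
    lower_pseudo_interval Li Ci :=
    forall_ltS (fun j => lower_pseudo_interval (build (take j Cs)) (nth [::] Cs j)) i.
  have fU : (forall j, j < i.+1 -> upper_pseudo_interval (build (take j Cs)) (nth [::] Cs j)) <->
    (forall j, j < i -> upper_pseudo_interval (build (take j Cs)) (nth [::] Cs j)) /\
    upper_pseudo_interval Li Ci :=
    forall_ltS (fun j => upper_pseudo_interval (build (take j Cs)) (nth [::] Cs j)) i.
  have fM : (forall j, j < i.+1 -> meets_spine (build (take j Cs)) (nth [::] Cs j)) <->
    (forall j, j < i -> meets_spine (build (take j Cs)) (nth [::] Cs j)) /\
    meets_spine Li Ci :=
    forall_ltS (fun j => meets_spine (build (take j Cs)) (nth [::] Cs j)) i.
  rewrite nji_double // nmi_double // mjE // mmE //.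
  set mj := count (isMin Li Ci) Li in mj1 mjE' *.
  set mm := count (isMax Li Ci) Li in mm1 mmE' *.
  case: (classic (meets_spine Li Ci)) => hm.
  + exists l.+1; split.
    * exact: len_meets.
    * lia.
    * lia.
    * split.
      - move=> e; have e1 : l = n_join_irr Li by lia.
        have e2 : mj = 1 by lia.
        have [h1 h2] := ej.1 e1; split; [apply/fL | apply/fM]; split => //.
        exact/mjE'.
      - case=> /fL [h1 h1'] /fM [h2 _]; rewrite -(ej.2 (conj h1 h2)).
        have := mjE'.2 h1'; lia.
    * split.
      - move=> e; have e1 : l = n_meet_irr Li by lia.
        have e2 : mm = 1 by lia.
        have [h1 h2] := em.1 e1; split; [apply/fU | apply/fM]; split => //.
        exact/mmE'.
      - case=> /fU [h1 h1'] /fM [h2 _]; rewrite -(em.2 (conj h1 h2)).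
        have := mmE'.2 h1'; lia.
  + exists l; split.
    * exact: len_nomeets.
    * lia.
    * lia.
    * split => [e|[_ /fM [_ h]] //]; lia.
    * split => [e|[_ /fM [_ h]] //]; lia.
Qed.

Theorem proposition3p11 (Cs : seq pset) (HCs : valid_cn Cs) :
  let L := build Cs in
  let Li i := build (take i Cs) in
  let C i := nth [::] Cs i in
  (join_extremal L <->
     (forall i, i < size Cs -> lower_pseudo_interval (Li i) (C i)) /\
     (forall i, i < size Cs -> meets_spine (Li i) (C i))) /\
  (meet_extremal L <->
     (forall i, i < size Cs -> upper_pseudo_interval (Li i) (C i)) /\
     (forall i, i < size Cs -> meets_spine (Li i) (C i))) /\
  (extremal L <->
     (forall i, i < size Cs -> is_interval (Li i) (C i)) /\
     (forall i, i < size Cs -> meets_spine (Li i) (C i))).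
Proof.
move=> L Li C.
have [l [pl lj lm ej em]] := main_ind HCs (leqnn (size Cs)).
rewrite take_size in pl lj lm ej em.
have J : join_extremal L <->
     (forall i, i < size Cs -> lower_pseudo_interval (Li i) (C i)) /\
     (forall i, i < size Cs -> meets_spine (Li i) (C i)).
  split => [h|h]; first by apply: ej.1; exact: len_unique pl h.
  by rewrite /join_extremal /L -(ej.2 h).
have M : meet_extremal L <->
     (forall i, i < size Cs -> upper_pseudo_interval (Li i) (C i)) /\
     (forall i, i < size Cs -> meets_spine (Li i) (C i)).
  split => [h|h]; first by apply: em.1; exact: len_unique pl h.
  by rewrite /meet_extremal /L -(em.2 h).
split => //; split => //.
have II : forall i, i < size Cs -> is_interval (Li i) (C i) <->
    lower_pseudo_interval (Li i) (C i) /\ upper_pseudo_interval (Li i) (C i).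
  move=> i hi; have [_ sub cv] := HCs i hi; exact: interval_iff.
rewrite /extremal; split.
- case=> /J [h1 h2] /M [h3 _]; split => // i hi; apply/(II i hi); split; auto.
- case=> h1 h2; split; [apply/J | apply/M]; split => // i hi; have := (II i hi).1 (h1 i hi); tauto.
Qed.
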